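(* Let $((A,\cdot),N)$ be a Nijenhuis algebra, $((M,\triangleright,\triangleleft),N_M)$ a Nijenhuis bimodule, and $0\to((M,0),N_M)\xrightarrow{i}((E,\cdot_E),N_E)\xrightarrow{p}((A,\cdot),N)\to0$ an abelian extension inducing this bimodule structure. Then there is a group isomorphism $\mathrm{Aut}_{M,A}(E,N_E)\cong Z^1_{\mathrm{NAlg}}((A,N);(M,N_M))$. Consequently the group $\mathrm{Aut}_{M,A}(E,N_E)$ is abelian.
   Context: Over a field of characteristic $0$. Nijenhuis algebra: associative $(A,\cdot)$ with linear $N$, $N(a)N(b)=N(N(a)b+aN(b)-N(ab))$; Nijenhuis bimodule: $A$-bimodule with linear $N_M$, $N(a)\triangleright N_M(u)=N_M(N(a)\triangleright u+a\triangleright N_M(u)-N_M(a\triangleright u))$, $N_M(u)\triangleleft N(a)=N_M(N_M(u)\triangleleft a+u\triangleleft N(a)-N_M(u\triangleleft a))$. Abelian extension: Nijenhuis algebra $E$ with a short exact sequence of Nijenhuis algebra homomorphisms (algebra maps commuting with the operators) as displayed ($M$ with zero multiplication, identified with $i(M)$), such that for any linear section $s$ of $p$, $a\triangleright u=s(a)\cdot_Eu$ and $u\triangleleft a=u\cdot_Es(a)$. $\mathrm{Aut}_{M,A}(E,N_E)$ is the group (under composition) of Nijenhuis algebra automorphisms $\varphi$ of $E$ with $\varphi(M)\subseteq M$, $\varphi|_M=\mathrm{Id}_M$ and $p\varphi s=\mathrm{Id}_A$. $Z^1_{\mathrm{NAlg}}((A,N);(M,N_M))$ is the additive group of linear maps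 $d:A\to M$ with $d(a\cdot b)=a\triangleright d(b)+d(a)\triangleleft b$ for all $a,b$ and $N_M\circ d=d\circ N$ (the 1-cocycles of the Nijenhuis algebra cohomology). *)

(* Defs.v *)
(* Non-unital associative algebras over a field K are given
   as K-vector spaces (lmodType K) with an explicit bilinear associative
   multiplication. *)
From HB Require Import structures.
From mathcomp Require Import all_boot all_order all_algebra.
Set Implicit Arguments. Unset Strict Implicit. Unset Printing Implicit Defensive.
Import GRing.Theory.
Local Open Scope ring_scope.

Section Defs.
Variable K : fieldType.

Definition bilinear_op (U V W : lmodType K) (f : U -> V -> W) : Prop :=
  (forall u, linear (f u)) /\ (forall v, linear (f^~ v)).

Definition is_nijenhuis_algebra (A : lmodType K) (mul : A -> A -> A) (N : A -> A) : Prop :=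
  (bilinear_op mul /\ associative mul /\ linear N /\
      forall a b, mul (N a) (N b) = N (mul (N a) b + mul a (N b) - N (mul a b))).

Definition is_nijenhuis_bimodule (A M : lmodType K) (mul : A -> A -> A) (N : A -> A)
  (actl : A -> M -> M) (actr : M -> A -> M) (NM : M -> M) : Prop :=
  (bilinear_op actl /\ bilinear_op actr /\ linear NM /\
      (forall a b u, actl (mul a b) u = actl a (actl b u)) /\
      (forall a b u, actr (actr u a) b = actr u (mul a b)) /\
      (forall a b u, actr (actl a u) b = actl a (actr u b)) /\
      (forall a u, actl (N a) (NM u) =
                   NM (actl (N a) u + actl a (NM u) - NM (actl a u)))  /\
      (forall a u, actr (NM u) (N a) =
                   NM (actr (NM u) a + actr u (N a) - NM (actr u a)))).

Definition is_abelian_extension (A M E : lmodType K)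
  (mul : A -> A -> A) (N : A -> A)
  (actl : A -> M -> M) (actr : M -> A -> M) (NM : M -> M)
  (mulE : E -> E -> E) (NE : E -> E) (i : M -> E) (p : E -> A) : Prop :=
  (is_nijenhuis_algebra mulE NE /\
      linear i /\ linear p /\ injective i /\
      (forall a, exists x, p x = a) /\
      (forall x, p x = 0 <-> exists u, x = i u) /\
      (forall u v, mulE (i u) (i v) = i 0) /\
      (forall x y, p (mulE x y) = mul (p x) (p y)) /\
      (forall u, NE (i u) = i (NM u)) /\
      (forall x, p (NE x) = N (p x))  /\
      (* the induced bimodule structure, for any linear section s of p *)
      (forall s : A -> E, linear s -> (forall a, p (s a) = a) ->
         forall a u, i (actl a u) = mulE (s a) (i u) /\
                     i (actr u a) = mulE (i u) (s a))).

Definition in_AutMA (A M E : lmodType K) (mulE : E -> E -> E) (NE : E -> E)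
  (i : M -> E) (p : E -> A) (phi : E -> E) : Prop :=
  (linear phi /\ bijective phi /\
      (forall x y, phi (mulE x y) = mulE (phi x) (phi y)) /\
      (forall x, NE (phi x) = phi (NE x)) /\
      (forall u, exists v, phi (i u) = i v) /\
      (forall u, phi (i u) = i u)  /\
      (forall s : A -> E, linear s -> (forall a, p (s a) = a) ->
         forall a, p (phi (s a)) = a)).

Definition in_Z1 (A M : lmodType K) (mul : A -> A -> A) (N : A -> A)
  (actl : A -> M -> M) (actr : M -> A -> M) (NM : M -> M) (d : A -> M) : Prop :=
  (linear d /\
      (forall a b, d (mul a b) = actl a (d b) + actr (d a) b)  /\
      (forall a, NM (d a) = d (N a))).

End Defs.

(* Main.v *)
From HB Require Import structures.
From mathcomp Require Import all_boot all_order all_algebra.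
Require Import Defs.
From mathcomp Require classical_sets.
From Stdlib Require Import Classical ClassicalEpsilon.
Set Implicit Arguments. Unset Strict Implicit.
Import GRing.Theory.
Local Open Scope ring_scope.

Section Lin.
Variables (K : fieldType) (U V : lmodType K) (f : U -> V) (Lf : linear f).
Lemma linB x y : f (x - y) = f x - f y.
Proof. exact: (zmod_morphism_linear Lf). Qed.
Lemma lin0 : f 0 = 0.
Proof. by rewrite -(subrr 0) linB subrr. Qed.
Lemma linN x : f (- x) = - f x.
Proof. by rewrite -sub0r linB lin0 sub0r. Qed.
Lemma linD x y : f (x + y) = f x + f y.
Proof. by have := linB x (- y); rewrite opprK => ->; rewrite linN opprK. Qed.
Lemma linZ a x : f (a *: x) = a *: f x.
Proof. exact: (scalable_linear Lf). Qed.
End Lin.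

Section ExSection.
Variables (K : fieldType) (E A : lmodType K) (p : E -> A).
Hypothesis Lp : linear p.
Hypothesis Sp : forall a, exists x, p x = a.

Definition PP (G : A * E -> Prop) :=
  [/\ (forall c a x b y, G (a,x) -> G (b,y) -> G (c*:a+b, c*:x+y)),
      (forall a x y, G (a,x) -> G (a,y) -> x = y) &
      (forall a x, G (a,x) -> p x = a)].

Lemma PP0 G : PP G -> PP (fun z => G z \/ z = (0,0)).
Proof.
case=> Gc Gf Gp.
have G00 a x : G (a,x) -> G (0,0).
  by move=> h; have := Gc (-1) _ _ _ _ h h; rewrite !scaleN1r !addNr.
split.
- move=> c a x b y [h1|[-> ->]] [h2|[-> ->]].
  + by left; apply: Gc.
  + by left; apply: Gc => //; apply: G00 h1.
  + by left; rewrite !scaler0 !add0r.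
  + by right; rewrite !scaler0 !addr0.
- move=> a x y [h1|e1] [h2|e2].
  + exact: Gf h1 h2.
  + by case: e2 => ea ->; rewrite ea in h1; apply: Gf h1 (G00 _ _ h1).
  + by case: e1 => ea ->; rewrite ea in h2; symmetry; apply: Gf h2 (G00 _ _ h2).
  + by case: e1 => _ ->; case: e2 => _ ->.
- move=> a x [h|[-> ->]]; first exact: Gp.
  exact: lin0.
Qed.

Lemma ex_section : exists s : A -> E, linear s /\ forall a, p (s a) = a.
Proof.
have HZ : forall F : classical_sets.set (classical_sets.set (A * E)),
    classical_sets.subset F PP -> classical_sets.total_on F classical_sets.subset ->
    PP (classical_sets.bigcup F id).
  move=> F FP Ftot.
  have two z1 z2 : classical_sets.bigcup F id z1 -> classical_sets.bigcup F id z2 ->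
      exists X, [/\ F X, X z1 & X z2].
    case=> X1 F1 h1 [X2 F2 h2].
    have [s12|s21] := Ftot _ _ F1 F2.
    - by exists X2; split => //; apply: s12.
    - by exists X1; split => //; apply: s21.
  split.
  - move=> c a x b y h1 h2; have [X [FX h1' h2']] := two _ _ h1 h2.
    by exists X => //; have [Xc _ _] := FP _ FX; apply: Xc.
  - move=> a x y h1 h2; have [X [FX h1' h2']] := two _ _ h1 h2.
    by have [_ Xf _] := FP _ FX; apply: Xf h1' h2'.
  - move=> a x [X FX h]; by have [_ _ Xp] := FP _ FX; apply: Xp h.
have [G [PG Gmax]] := classical_sets.Zorn_bigcup HZ.
set G0 := fun z => G z \/ z = (0,0).
have PG0 : PP G0 by apply: PP0.
case: (PG0) => G0c G0f G0p.
have tot : forall a, exists x, G0 (a,x).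
  move=> a0; apply: NNPP => na0.
  have [e0 pe0] := Sp a0.
  pose G' := fun z : A * E => exists c b y, G0 (b,y) /\ z = (b + c*:a0, y + c*:e0).
  apply: (Gmax G'); last first.
    split.
    - move=> c a x b y [c1 [b1 [y1 [h1 [-> ->]]]]] [c2 [b2 [y2 [h2 [-> ->]]]]].
      exists (c * c1 + c2), (c*:b1 + b2), (c*:y1 + y2); split; first exact: G0c.
      by rewrite !scalerDr !scalerDl !scalerA; congr (_, _); apply: addrACA.
    - move=> a x y [c1 [b1 [y1 [h1 [ea ->]]]]] [c2 [b2 [y2 [h2 [eb ->]]]]].
      rewrite ea in eb.
      have [ec|nec] := eqVneq c1 c2.
        rewrite ec in eb *; have eb' := addIr _ eb; rewrite eb' in h1.
        by rewrite (G0f _ _ _ h1 h2).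
      exfalso; apply: na0.
      have h3 := G0c (-1) _ _ _ _ h1 h2.
      have h4 := G0c ((c1 - c2)^-1) _ _ _ _ h3 (or_intror erefl).
      eexists; move: h4; congr (G0 (_, _)).
      rewrite addr0 scaleN1r [- b1 + b2]addrC.
      have -> : b2 - b1 = (c1 - c2) *: a0.
        rewrite scalerBl; apply: (addIr (b1 + c2 *: a0)).
        by rewrite [LHS]addrA subrK [RHS]addrCA subrK eb.
      by rewrite scalerA mulVf ?scale1r // subr_eq0.
    - move=> a x [c [b [y [h [-> ->]]]]].
      by rewrite (linD Lp) (linZ Lp) pe0 (G0p _ _ h).
  split.
  - move=> z Gz; exists 0, z.1, z.2; split; first by left; case: z Gz.
    by rewrite !scale0r !addr0; case: z Gz.
  - move=> sub; have : G' (a0, e0).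
      by exists 1, 0, 0; split; [right | rewrite !add0r !scale1r].
    by move/sub => h; apply: na0; exists e0; left.
pose s a := proj1_sig (constructive_indefinite_description _ (tot a)).
have sP a : G0 (a, s a) by rewrite /s; case: constructive_indefinite_description.
exists s; split.
- move=> c a b; apply: (G0f (c *: a + b)); first exact: sP.
  exact: G0c.
- by move=> a; apply: G0p (sP a).
Qed.
End ExSection.

Lemma lin_comp (K : fieldType) (U V W : lmodType K) (f : V -> W) (g : U -> V) :
  linear f -> linear g -> linear (f \o g).
Proof. by move=> Lf Lg a u v; rewrite /= Lg Lf. Qed.

Lemma sub_sub (V : zmodType) (a b c : V) : (a - c) - (b - c) = a - b.
Proof. by rewrite opprB addrA subrK. Qed.

Theorem proposition5p5 (K : fieldType) (charK0 : [pchar K] =i pred0)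
  (A M E : lmodType K)
  (mul : A -> A -> A) (N : A -> A)
  (actl : A -> M -> M) (actr : M -> A -> M) (NM : M -> M)
  (mulE : E -> E -> E) (NE : E -> E) (i : M -> E) (p : E -> A) :
  is_nijenhuis_algebra mul N ->
  is_nijenhuis_bimodule mul N actl actr NM ->
  is_abelian_extension mul N actl actr NM mulE NE i p ->
  (exists Phi : (E -> E) -> (A -> M),
     [/\ (forall phi, in_AutMA mulE NE i p phi -> in_Z1 mul N actl actr NM (Phi phi)),
         (forall phi psi, in_AutMA mulE NE i p phi -> in_AutMA mulE NE i p psi ->
            forall a, Phi (phi \o psi) a = Phi phi a + Phi psi a),
         (forall phi psi, in_AutMA mulE NE i p phi -> in_AutMA mulE NE i p psi ->
            Phi phi =1 Phi psi -> phi =1 psi) &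
         (forall d, in_Z1 mul N actl actr NM d ->
            exists phi, in_AutMA mulE NE i p phi /\ Phi phi =1 d)])
  /\
  (forall phi psi, in_AutMA mulE NE i p phi -> in_AutMA mulE NE i p psi ->
     phi \o psi =1 psi \o phi).
Proof.
move=> HA HM HE.
case: HE => [HNE [Li [Lp [ii [ps [kerp [ii0 [pmul [NEi [pNE hact]]]]]]]]]].
case: HNE => [[mEl mEr] [_ [LNE _]]].
have [s [Ls ps_]] := ex_section Lp ps.
have pi u : p (i u) = 0 by apply/(proj2 (kerp (i u))); exists u.
have hr x : exists u, i u = x - s (p x).
  have : p (x - s (p x)) = 0 by rewrite (linB Lp) ps_ subrr.
  by case/kerp => u ->; exists u.
pose r x := proj1_sig (constructive_indefinite_description _ (hr x)).
have rP x : i (r x) = x - s (p x).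
  by rewrite /r; case: constructive_indefinite_description.
have decomp x : x = s (p x) + i (r x) by rewrite rP addrCA subrr addr0.
have rsi a w : r (s a + i w) = w.
  by apply: ii; rewrite rP (linD Lp) ps_ pi addr0 addrC addKr.
have sY Y : s (p Y) = Y - i (r Y) by rewrite rP opprB addrC subrK.
have hY f : linear f -> (forall u, f (i u) = i u) -> forall Y,
    f (s (p Y)) - s (p Y) = f Y - Y.
  by move=> Lf fi Y; rewrite sY (linB Lf) fi sub_sub.
have iR f : (forall x, p (f x) = p x) -> forall a, i (r (f (s a))) = f (s a) - s a.
  by move=> pf a; rewrite rP pf ps_.
have key f : linear f -> (forall u, f (i u) = i u) -> (forall x, p (f x) = p x) ->
    forall x, f x = x + i (r (f (s (p x)))).
  move=> Lf fi pf x; rewrite iR //.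
  by rewrite {1}(decomp x) (linD Lf) fi [RHS]addrC -addrA rP [- _ + x]addrC.
have mulL x u : mulE x (i u) = i (actl (p x) u).
  rewrite {1}(decomp x) (linD (mEr _)) ii0 (lin0 Li) addr0.
  by case: (hact s Ls ps_ (p x) u).
have mulR x u : mulE (i u) x = i (actr u (p x)).
  rewrite {1}(decomp x) (linD (mEl _)) ii0 (lin0 Li) addr0.
  by case: (hact s Ls ps_ (p x) u).
have autP f : in_AutMA mulE NE i p f ->
    [/\ linear f, (forall x y, f (mulE x y) = mulE (f x) (f y)),
        (forall x, NE (f x) = f (NE x)), (forall u, f (i u) = i u) &
        (forall x, p (f x) = p x)].
  case=> [Lf [_ [fm [fN [_ [fi fp]]]]]]; split => // x.
  by rewrite {1}(decomp x) (linD Lf) fi (linD Lp) pi addr0 (fp s Ls ps_).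
have Lr : linear r.
  move=> c x y; apply: ii.
  by rewrite Li !rP Lp Ls scalerBr opprD addrACA.
pose Phi (f : E -> E) a := r (f (s a)).
split.
  exists Phi; split.
  - move=> f /autP [Lf fm fN fi pf]; split.
      exact: (lin_comp (lin_comp Lr Lf) Ls).
    split.
    + move=> a b; apply: ii; rewrite /Phi iR //.
      have := hY f Lf fi (mulE (s a) (s b)); rewrite pmul !ps_ => ->.
      rewrite fm (key f Lf fi pf (s a)) (key f Lf fi pf (s b)) !ps_.
      rewrite (linD (mEr _)) !(linD (mEl _)) ii0 (lin0 Li) addr0.
      rewrite mulL mulR !ps_ (linD Li).
      by rewrite ?rsi [LHS]addrC !addrA addNr add0r.
    + move=> a; apply: ii; rewrite /Phi -NEi iR // iR // (linB LNE).
      have := hY f Lf fi (NE (s a)); rewrite pNE ps_ => ->.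
      by rewrite fN.
  - move=> f g /autP [Lf fm fN fi pf] /autP [Lg gm gN gi pg] a.
    apply: ii; rewrite /Phi (linD Li) (iR (f \o g)); last by move=> x /=; rewrite pf pg.
    rewrite !iR // /=.
    have e : g (s a) - s a = i (r (g (s a))) by rewrite iR.
    have -> : f (g (s a)) = (g (s a) - s a) + f (s a).
      by rewrite -{1}(subrK (s a) (g (s a))) (linD Lf) e fi -e.
    by rewrite -addrA addrC.
  - move=> f g /autP [Lf fm fN fi pf] /autP [Lg gm gN gi pg] eq x.
    by rewrite (key f Lf fi pf x) (key g Lg gi pg x); have := eq (p x); rewrite /Phi => ->.
  - move=> d [Ld [dm dN]].
    exists (fun x => x + i (d (p x))); split; last first.
      by move=> a; rewrite /Phi ps_ rsi.
    split.
      by move=> c x y; rewrite Lp Ld Li scalerDr addrACA.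
    split.
      exists (fun x => x - i (d (p x))).
        by move=> x; rewrite (linD Lp) pi addr0 addrK.
      by move=> x; rewrite (linB Lp) pi subr0 subrK.
    split.
      move=> x y; rewrite pmul dm (linD Li).
      rewrite (linD (mEr _)) !(linD (mEl _)) ii0 (lin0 Li) addr0.
      by rewrite mulL mulR addrA.
    split.
      by move=> x; rewrite (linD LNE) NEi dN pNE.
    have fi u : i u + i (d (p (i u))) = i u by rewrite pi (lin0 Ld) (lin0 Li) addr0.
    split; first by move=> u; exists u; rewrite fi.
    split; first exact: fi.
    by move=> s' Ls' ps' a; rewrite (linD Lp) pi addr0 ps'.
move=> f g /autP [Lf fm fN fi pf] /autP [Lg gm gN gi pg] x /=.
rewrite (key f Lf fi pf (g x)) (key g Lg gi pg (f x)) (pf x) (pg x).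
rewrite {1}(key g Lg gi pg x) {1}(key f Lf fi pf x).
by rewrite addrAC.
Qed.
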